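(* If $\widetilde{\sigma}_{AB},\widetilde{\sigma}'_{AB}\in\widetilde{S}_{AB}$ have a common upper bound, their supremum exists in $\widetilde{S}_{AB}$ and $$\widetilde{\sigma}_{AB}\sqcup_{\widetilde{S}_{AB}}\widetilde{\sigma}'_{AB}=\inf^{\widetilde{S}_{AB}}\big(\underline{\widetilde{\sigma}_{AB}}\cap\underline{\widetilde{\sigma}'_{AB}}\big),$$ where for $\sigma\in\widetilde{S}_{AB}$, $\underline{\sigma}$ denotes the set of pure states of $\widetilde{S}_{AB}$ (elements $\sigma_A\widetilde{\otimes}\sigma_B$ with $\sigma_A,\sigma_B$ pure) lying above $\sigma$.
   Context: $(\mathfrak{S}_A,\mathfrak{E}_A,\epsilon^{\mathfrak{S}_A})$, $(\mathfrak{S}_B,\mathfrak{E}_B,\epsilon^{\mathfrak{S}_B})$ are States/Effects Chu spaces valued in $\mathfrak{B}=\{\mathbf{Y},\mathbf{N},\bot\}$ (meet $\wedge$, product $\bullet$: $x\bullet\mathbf{Y}=x$, $x\bullet\mathbf{N}=\mathbf{N}$, $\bot\bullet\bot=\bot$), whose spaces of states admit a description in terms of pure states (completely meet-irreducible elements = maximal elements, generating every state as infimum). The minimal tensor product $\widetilde{S}_{AB}$ consists of the maps $\inf^{\widetilde{S}_{AB}}_{i\in I}\sigma_{i,A}\widetilde{\otimes}\sigma_{i,B}:(\mathfrak{l}_A,\mathfrak{l}_B)\mapsto\bigwedge_{i\in I}\epsilon^{\mathfrak{S}_A}_{\mathfrak{l}_A}(\sigma_{i,A})\bullet\epsilon^{\mathfrak{S}_B}_{\mathfrak{l}_B}(\sigma_{i,B})$,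 ordered pointwise; every element of $\widetilde{S}_{AB}$ is the infimum of the pure tensors of pure states above it. *)

(* Defs.v *)
Set Implicit Arguments.

Inductive Bval : Type := BY | BN | Bbot.

Definition Ble (x y : Bval) : Prop := x = Bbot \/ x = y.

Definition Bprod (x y : Bval) : Bval :=
  match x, y with
  | _, BY => x
  | _, BN => BN
  | BY, Bbot => Bbot
  | BN, Bbot => BN
  | Bbot, Bbot => Bbot
  end.

Definition lower_bound {X : Type} (le : X -> X -> Prop) (P : X -> Prop) (x : X) :=
  forall y, P y -> le x y.
Definition upper_bound {X : Type} (le : X -> X -> Prop) (P : X -> Prop) (x : X) :=
  forall y, P y -> le y x.
Definition is_inf {X : Type} (le : X -> X -> Prop) (P : X -> Prop) (x : X) :=
  lower_bound le P x /\ forall z, lower_bound le P z -> le z x.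
Definition is_maximal {X : Type} (le : X -> X -> Prop) (x : X) :=
  forall y, le x y -> y = x.
Definition completely_meet_irreducible {X : Type} (le : X -> X -> Prop) (x : X) :=
  forall P : X -> Prop, is_inf le P x -> P x.

Record SEChu : Type := {
  St : Type;
  Ef : Type;
  sle : St -> St -> Prop;
  sle_refl : forall s, sle s s;
  sle_trans : forall s t u, sle s t -> sle t u -> sle s u;
  sle_antisym : forall s t, sle s t -> sle t s -> s = t;
  sinf_exists : forall P : St -> Prop, (exists s, P s) -> exists s, is_inf sle P s;
  eps : Ef -> St -> Bval;
  eps_inf : forall (l : Ef) (P : St -> Prop) (s : St),
      (exists x, P x) -> is_inf sle P s ->
      is_inf Ble (fun b => exists x, P x /\ b = eps l x) (eps l s);
  (* pure states: completely meet-irreducible elements = maximal elements *)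
  cmi_maximal : forall s, completely_meet_irreducible sle s <-> is_maximal sle s;
  pure_generating : forall s, is_inf sle (fun p => is_maximal sle p /\ sle s p) s
}.

Definition pure (A : SEChu) (s : St A) : Prop := is_maximal (@sle A) s.

(** Candidate elements of the minimal tensor product: maps E_A x E_B -> B. *)
Definition TMap (A B : SEChu) : Type := Ef A -> Ef B -> Bval.

Definition Tle {A B : SEChu} (f g : TMap A B) : Prop :=
  forall lA lB, Ble (f lA lB) (g lA lB).

Definition tens {A B : SEChu} (sA : St A) (sB : St B) : TMap A B :=
  fun lA lB => Bprod (@eps A lA sA) (@eps B lB sB).

(** Elements of the minimal tensor product \tilde S_AB:
    inf_{i in I} sigma_{i,A} (x) sigma_{i,B}  for a nonempty family,
    i.e. (lA,lB) |-> /\_{i in I} eps_lA(sigma_{i,A}) * eps_lB(sigma_{i,B}).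
    The family is represented by the (nonempty) set [F] of its pairs. *)
Definition in_Smin {A B : SEChu} (f : TMap A B) : Prop :=
  exists F : St A -> St B -> Prop,
    (exists sA sB, F sA sB) /\
    forall lA lB,
      is_inf Ble (fun b => exists sA sB, F sA sB /\ b = tens sA sB lA lB) (f lA lB).

Definition pure_tensor {A B : SEChu} (t : TMap A B) : Prop :=
  exists (sA : St A) (sB : St B), pure A sA /\ pure B sB /\ t = tens sA sB.

Definition pure_above {A B : SEChu} (s : TMap A B) (t : TMap A B) : Prop :=
  pure_tensor t /\ Tle s t.

Definition is_sup_Smin {A B : SEChu} (s s' u : TMap A B) : Prop :=
  in_Smin u /\ Tle s u /\ Tle s' u /\
  forall v, in_Smin v -> Tle s v -> Tle s' v -> Tle u v.

(** inf^{\tilde S_AB} of a set U of elements: pointwise infimum. *)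
Definition is_inf_Smin {A B : SEChu} (U : TMap A B -> Prop) (u : TMap A B) : Prop :=
  forall lA lB, is_inf Ble (fun b => exists t, U t /\ b = t lA lB) (u lA lB).

(* Main.v *)
Require Import Defs.
From Stdlib Require Import Classical ClassicalEpsilon.

Lemma Ble_refl x : Ble x x. Proof. right; reflexivity. Qed.
Lemma Ble_trans x y z : Ble x y -> Ble y z -> Ble x z.
Proof. unfold Ble; intros [->| ->] H; auto. Qed.

Lemma Bprod_mono x x' y y' : Ble x x' -> Ble y y' -> Ble (Bprod x y) (Bprod x' y').
Proof.
  unfold Ble; intros [->| ->] [->| ->]; destruct x', y'; simpl; auto.
Qed.

Lemma flat_inf (P : Bval -> Prop) : (exists y, P y) -> exists x, is_inf Ble P x.
Proof.
  intros [y0 Hy0].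
  destruct (classic (exists c, c <> Bbot /\ forall y, P y -> y = c)) as [[c [Hc Hall]]|Hn].
  - exists c; split.
    + intros y Hy; rewrite (Hall y Hy); apply Ble_refl.
    + intros z Hz; rewrite <- (Hall y0 Hy0); apply Hz; auto.
  - exists Bbot; split.
    + intros y _; left; reflexivity.
    + intros z Hz. destruct (classic (z = Bbot)) as [E|E]; [left; auto|].
      exfalso; apply Hn; exists z; split; auto.
      intros y Hy; destruct (Hz y Hy); congruence.
Qed.

Lemma inf_const (P : Bval -> Prop) a c y0 : is_inf Ble P a -> P y0 -> c <> Bbot ->
  (forall y, P y -> y = c) -> a = c.
Proof.
  intros [Hl Hg] Hy0 Hc Hall.
  assert (H1 : Ble c a) by (apply Hg; intros y Hy; rewrite (Hall y Hy); apply Ble_refl).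
  destruct H1; congruence.
Qed.

Lemma is_inf_ext (P Q : Bval -> Prop) x : is_inf Ble P x -> (forall b, P b <-> Q b) -> is_inf Ble Q x.
Proof.
  intros [Hl Hg] E; split.
  - intros y Hy; apply Hl, E, Hy.
  - intros z Hz; apply Hg; intros y Hy; apply Hz, E, Hy.
Qed.

Lemma eps_mono (A : SEChu) l (s t : St A) : sle A s t -> Ble (eps A l s) (eps A l t).
Proof.
  intros Hst.
  assert (Hi : is_inf (sle A) (fun x => x = s \/ x = t) s).
  { split.
    - intros y [->| ->]; auto using sle_refl.
    - intros z Hz; apply Hz; auto. }
  destruct (@eps_inf A l (fun x => x = s \/ x = t) s (ex_intro (fun x => x = s \/ x = t) s (or_introl eq_refl)) Hi) as [Hl _].
  apply Hl; exists t; auto.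
Qed.

Lemma pure_above_ex (A : SEChu) (s : St A) : exists p, pure A p /\ sle A s p.
Proof.
  destruct (classic (exists p, pure A p /\ sle A s p)) as [H|H]; auto.
  destruct (pure_generating A s) as [_ Hg].
  assert (Htop : forall z, sle A z s).
  { intros z; apply Hg; intros y Hy; exfalso; apply H; exists y; exact Hy. }
  exists s; split; [|apply sle_refl].
  intros y Hy; apply sle_antisym; auto.
Qed.

Lemma eps_pure_inf (A : SEChu) l (s : St A) :
  is_inf Ble (fun b => exists x, (is_maximal (sle A) x /\ sle A s x) /\ b = eps A l x) (eps A l s).
Proof.
  apply eps_inf; [|apply pure_generating].
  destruct (pure_above_ex A s) as [p Hp]; exists p; exact Hp.
Qed.

Lemma tens_mono (A B : SEChu) (sA pA : St A) (sB pB : St B) lA lB :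
  sle A sA pA -> sle B sB pB -> Ble (tens sA sB lA lB) (tens pA pB lA lB).
Proof. intros; unfold tens; apply Bprod_mono; apply eps_mono; auto. Qed.

Lemma key (A B : SEChu) (sA : St A) (sB : St B) lA lB x :
  (forall pA pB, pure A pA -> sle A sA pA -> pure B pB -> sle B sB pB ->
     Ble x (tens pA pB lA lB)) -> Ble x (tens sA sB lA lB).
Proof.
  intros H. unfold tens in *.
  pose proof (eps_pure_inf A lA sA) as Ha.
  pose proof (eps_pure_inf B lB sB) as Hb.
  destruct (pure_above_ex A sA) as [pA0 [HpA0 HsA0]].
  destruct (pure_above_ex B sB) as [pB0 [HpB0 HsB0]].
  destruct x.
  - assert (HA : forall pA, pure A pA -> sle A sA pA -> eps A lA pA = BY).
    { intros pA h1 h2. destruct (H pA pB0 h1 h2 HpB0 HsB0) as [E|E]; [discriminate|].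
      destruct (eps A lA pA), (eps B lB pB0); simpl in E; congruence. }
    assert (HB : forall pB, pure B pB -> sle B sB pB -> eps B lB pB = BY).
    { intros pB h1 h2. destruct (H pA0 pB HpA0 HsA0 h1 h2) as [E|E]; [discriminate|].
      destruct (eps A lA pA0), (eps B lB pB); simpl in E; congruence. }
    assert (Einf : eps A lA sA = BY).
    { apply (inf_const _ _ BY (eps A lA pA0) Ha).
      - exists pA0; auto.
      - discriminate.
      - intros y [p [[h1 h2] ->]]; apply HA; auto. }
    rewrite Einf; clear Einf.
    assert (Einf : eps B lB sB = BY).
    { apply (inf_const _ _ BY (eps B lB pB0) Hb).
      - exists pB0; auto.
      - discriminate.
      - intros y [p [[h1 h2] ->]]; apply HB; auto. }
    rewrite Einf; clear Einf.
    apply Ble_refl.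
  - assert (HN : forall pA pB, pure A pA -> sle A sA pA -> pure B pB -> sle B sB pB ->
       eps A lA pA = BN \/ eps B lB pB = BN).
    { intros pA pB h1 h2 h3 h4. destruct (H pA pB h1 h2 h3 h4) as [E|E]; [discriminate|].
      destruct (eps A lA pA), (eps B lB pB); simpl in E; auto; discriminate. }
    destruct (classic (forall pA, pure A pA -> sle A sA pA -> eps A lA pA = BN)) as [HA|HA].
    + assert (Einf : eps A lA sA = BN).
    { apply (inf_const _ _ BN (eps A lA pA0) Ha).
      - exists pA0; auto.
      - discriminate.
      - intros y [p [[h1 h2] ->]]; apply HA; auto. }
    rewrite Einf; clear Einf.
      right; destruct (eps B lB sB); reflexivity.
    + apply not_all_ex_not in HA; destruct HA as [pA1 HA].
      apply imply_to_and in HA; destruct HA as [h1 HA].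
      apply imply_to_and in HA; destruct HA as [h2 HA].
      assert (Einf : eps B lB sB = BN).
    { apply (inf_const _ _ BN (eps B lB pB0) Hb).
      - exists pB0; auto.
      - discriminate.
      - intros y [p [[h3 h4] ->]];
         destruct (HN pA1 p h1 h2 h3 h4); [contradiction|auto]. }
    rewrite Einf; clear Einf.
      right; destruct (eps A lA sA); reflexivity.
  - left; reflexivity.
Qed.

Theorem mainTheorem14 (A B : SEChu) (s s' : TMap A B) :
  in_Smin s -> in_Smin s' ->
  (exists v, in_Smin v /\ Tle s v /\ Tle s' v) ->
  exists u, is_sup_Smin s s' u /\
            is_inf_Smin (fun t => pure_above s t /\ pure_above s' t) u.
Proof.
  intros _ _ [v [[F [[sA [sB HF]] Hv]] [Hsv Hs'v]]].
  set (U := fun t : TMap A B => pure_above s t /\ pure_above s' t).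
  assert (HU : exists t, U t).
  { destruct (pure_above_ex A sA) as [pA [h1 h2]].
    destruct (pure_above_ex B sB) as [pB [h3 h4]].
    assert (Hle : Tle v (tens pA pB)).
    { intros lA lB. apply Ble_trans with (tens sA sB lA lB).
      - apply (proj1 (Hv lA lB)); exists sA, sB; auto.
      - apply tens_mono; auto. }
    exists (tens pA pB); split; split;
      try (exists pA, pB; auto);
      intros lA lB; eapply Ble_trans; [apply Hsv|apply Hle| |]; [apply Hs'v|apply Hle]. }
  destruct HU as [t0 Ht0].
  assert (Hex : forall lA lB, exists x, is_inf Ble (fun b => exists t, U t /\ b = t lA lB) x).
  { intros lA lB; apply flat_inf; exists (t0 lA lB), t0; auto. }
  set (u := fun lA lB => proj1_sig (constructive_indefinite_description _ (Hex lA lB))).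
  assert (Hu : is_inf_Smin U u).
  { intros lA lB; unfold u; destruct (constructive_indefinite_description _ _); auto. }
  exists u; split; [|exact Hu].
  split; [|split; [|split]].
  - exists (fun pA pB => U (tens pA pB)); split.
    + pose proof Ht0 as H0; destruct H0 as [[[pA [pB [_ [_ E]]]] _] _]. subst t0. exists pA, pB; exact Ht0.
    + intros lA lB; eapply is_inf_ext; [apply Hu|].
      intros b; split.
      * intros [t [Ht ->]]. pose proof Ht as Ht'. destruct Ht' as [[[pA [pB [_ [_ E]]]] _] _].
        subst t. exists pA, pB; split; [exact Ht|reflexivity].
      * intros [pA [pB [h ->]]]; exists (tens pA pB); auto.
  - intros lA lB; apply (proj2 (Hu lA lB)); intros y [t [[[_ Ht] _] ->]]; apply Ht.
  - intros lA lB; apply (proj2 (Hu lA lB)); intros y [t [[_ [_ Ht]] ->]]; apply Ht.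
  - intros w [G [_ Hw]] Hsw Hs'w lA lB.
    apply (proj2 (Hw lA lB)). intros y [qA [qB [HG ->]]].
    apply key. intros pA pB h1 h2 h3 h4.
    apply (proj1 (Hu lA lB)). exists (tens pA pB); split; [|reflexivity].
    assert (Hle : Tle w (tens pA pB)).
    { intros lA' lB'. apply Ble_trans with (tens qA qB lA' lB').
      - apply (proj1 (Hw lA' lB')); exists qA, qB; auto.
      - apply tens_mono; auto. }
    split; split; try (exists pA, pB; auto);
      intros lA' lB'; eapply Ble_trans; [apply Hsw|apply Hle| |]; [apply Hs'w|apply Hle].
Qed.
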